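(* Let $\alpha\neq 0$, $\beta,\gamma$ be real numbers and $\lambda$ a nonnegative integer. For all nonnegative integers $n$, $$\mathcal{E}_{n}^{(\lambda)}(\alpha,\beta,\gamma)=\sum_{k=0}^{n}S(n,k,\alpha,\beta,\gamma)\binom{k+\lambda-1}{k}k!\frac{(-\beta)^{k}}{2^{k}}$$ and $$\mathcal{E}_{n}^{(\lambda)}(\alpha,\beta,\gamma)=\sum_{k=0}^{n}S(n,k,\alpha,-\beta,\gamma-\beta\lambda)\binom{k+\lambda-1}{k}k!\frac{\beta^{k}}{2^{k}}.$$
   Context: For a number $t$ and $\alpha$, the generalised factorial is $(t|\alpha)_n=\prod_{j=0}^{n-1}(t-j\alpha)$ for $n\ge 1$ and $(t|\alpha)_0=1$. For parameters $\alpha,\beta,\gamma$, the generalised Stirling numbers $S(n,k,\alpha,\beta,\gamma)$ ($0\le k\le n$) are defined by the polynomial identity $(t|\alpha)_n=\sum_{k=0}^{n}S(n,k,\alpha,\beta,\gamma)\,(t-\gamma|\beta)_k$ in the variable $t$. For a nonnegative integer $\lambda$ put $\binom{k+\lambda-1}{k}=\lambda(\lambda+1)\cdots(\lambda+k-1)/k!$ (equal to $1$ for $k=0$). The higher order generalised Euler polynomials $\mathcal{E}_n^{(\lambda)}(\alpha,\beta,x)$ are defined by the formal power series identity $$\left[\frac{2}{(1+\alpha t)^{\beta/\alpha}+1}\right]^{\lambda}(1+\alpha t)^{x/\alpha}=\sum_{n=0}^{\infty}\mathcal{E}_{n}^{(\lambda)}(\alpha,\beta,x)\frac{t^{n}}{n!},$$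 where $(1+\alpha t)^{c}=\sum_{j\ge0}\binom{c}{j}\alpha^jt^j$. *)

(* Defs.v *)
From mathcomp Require Import all_boot all_order all_algebra.
Set Implicit Arguments. Unset Strict Implicit. Unset Printing Implicit Defensive.
Import Order.TTheory GRing.Theory Num.Theory.
Local Open Scope ring_scope.

Section Defs.
Variable R : fieldType.

Definition gfact (a : R) (n : nat) : {poly R} :=
  \prod_(j < n) ('X - (j%:R * a)%:P).

Definition gfact_shift (c b : R) (k : nat) : {poly R} :=
  \prod_(j < k) ('X - (c + j%:R * b)%:P).

Definition is_genStirling (a b c : R) (S : nat -> nat -> R) : Prop :=
  forall n : nat, gfact a n = \sum_(k < n.+1) S n k *: gfact_shift c b k.

(* formal power series as coefficient sequences *)
Definition sone : nat -> R := fun n => if n is 0 then 1 else 0.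
Definition sadd (f g : nat -> R) : nat -> R := fun n => f n + g n.
Definition sscale (c : R) (f : nat -> R) : nat -> R := fun n => c * f n.
Definition smul (f g : nat -> R) : nat -> R :=
  fun n => \sum_(i < n.+1) f i * g (n - i)%N.
Definition spow (f : nat -> R) (k : nat) : nat -> R := iter k (smul f) sone.

(* first n+1 coefficients of the multiplicative inverse of f (f 0 <> 0) *)
Fixpoint sinv_upto (f : nat -> R) (n : nat) : seq R :=
  match n with
  | 0 => [:: (f 0%N)^-1]
  | m.+1 => let s := sinv_upto f m in
      rcons s (- (f 0%N)^-1 * \sum_(i < m.+1) f i.+1 * nth 0 s (m - i)%N)
  end.
Definition sinv (f : nat -> R) : nat -> R := fun n => nth 0 (sinv_upto f n) n.

Definition gbinom (c : R) (j : nat) : R :=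
  (\prod_(i < j) (c - i%:R)) / (j`!)%:R.

(* (1 + a t)^c = sum_j binom(c,j) a^j t^j *)
Definition sbinpow (a c : R) : nat -> R := fun j => gbinom c j * a ^+ j.

Definition genEuler (lam : nat) (a b x : R) (n : nat) : R :=
  (n`!)%:R *
  smul (spow (sscale 2 (sinv (sadd (sbinpow a (b / a)) sone))) lam)
       (sbinpow a (x / a)) n.

(* binom(k + lam - 1, k) = lam (lam+1) ... (lam+k-1) / k! *)
Definition rbinom (lam k : nat) : R :=
  (\prod_(i < k) (lam + i)%:R) / (k`!)%:R.

End Defs.

(* Main.v *)
Require Import Defs.
From mathcomp Require Import all_boot all_order all_algebra.
From mathcomp Require Import ring lra zify.
Import Order.TTheory GRing.Theory Num.Theory.
Set Implicit Arguments. Unset Strict Implicit. Unset Printing Implicit Defensive.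
Local Open Scope ring_scope.

Definition eqm (R : fieldType) (n : nat) (p q : {poly R}) :=
  forall i, (i <= n)%N -> p`_i = q`_i.
Definition rep (R : fieldType) (n : nat) (f : nat -> R) (p : {poly R}) :=
  forall i, (i <= n)%N -> f i = p`_i.

Lemma eqm_refl (R : fieldType) n (p : {poly R}) : eqm n p p.
Proof. by []. Qed.
Lemma eqm_sym (R : fieldType) n (p q : {poly R}) : eqm n p q -> eqm n q p.
Proof. by move=> h i hi; rewrite h. Qed.
Lemma eqm_trans (R : fieldType) n (p q r : {poly R}) :
  eqm n p q -> eqm n q r -> eqm n p r.
Proof. by move=> h1 h2 i hi; rewrite h1 ?h2. Qed.
Lemma eqmD (R : fieldType) n (p p' q q' : {poly R}) :
  eqm n p p' -> eqm n q q' -> eqm n (p + q) (p' + q').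
Proof. by move=> h1 h2 i hi; rewrite !coefD h1 ?h2. Qed.
Lemma eqmN (R : fieldType) n (p p' : {poly R}) :
  eqm n p p' -> eqm n (- p) (- p').
Proof. by move=> h1 i hi; rewrite !coefN h1. Qed.
Lemma eqmM (R : fieldType) n (p p' q q' : {poly R}) :
  eqm n p p' -> eqm n q q' -> eqm n (p * q) (p' * q').
Proof.
move=> h1 h2 i hi; rewrite !coefM; apply: eq_bigr => j _.
have hj : (j <= n)%N by apply: leq_trans hi; rewrite -ltnS.
by rewrite h1 // h2 // (leq_trans (leq_subr _ _) hi).
Qed.
Lemma eqmX (R : fieldType) n (p p' : {poly R}) k :
  eqm n p p' -> eqm n (p ^+ k) (p' ^+ k).
Proof.
by move=> h; elim: k => [|k IH]; rewrite ?expr0 // !exprS; apply: eqmM.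
Qed.

Lemma rep_smul (R : fieldType) n f g (p q : {poly R}) :
  rep n f p -> rep n g q -> rep n (smul f g) (p * q).
Proof.
move=> h1 h2 i hi; rewrite /smul coefM; apply: eq_bigr => j _.
have hj : (j <= n)%N by apply: leq_trans hi; rewrite -ltnS.
by rewrite h1 // h2 // (leq_trans (leq_subr _ _) hi).
Qed.
Lemma rep_sone (R : fieldType) n : rep n (@sone R) 1.
Proof. by move=> [|i] _; rewrite coef1. Qed.
Lemma rep_sadd (R : fieldType) n f g (p q : {poly R}) :
  rep n f p -> rep n g q -> rep n (sadd f g) (p + q).
Proof. by move=> h1 h2 i hi; rewrite /sadd coefD h1 ?h2. Qed.
Lemma rep_sscale (R : fieldType) n c f (p : {poly R}) :
  rep n f p -> rep n (sscale c f) (c%:P * p).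
Proof. by move=> h1 i hi; rewrite /sscale coefCM h1. Qed.
Lemma rep_spow (R : fieldType) n f (p : {poly R}) k :
  rep n f p -> rep n (spow f k) (p ^+ k).
Proof.
move=> h; elim: k => [|k IH]; first exact: rep_sone.
by rewrite exprS /spow iterS; apply: rep_smul.
Qed.
Definition Tp (R : fieldType) n (f : nat -> R) : {poly R} := \poly_(i < n.+1) f i.
Lemma rep_Tp (R : fieldType) n (f : nat -> R) : rep n f (Tp n f).
Proof. by move=> i hi; rewrite coef_poly ltnS hi. Qed.
Lemma rep_eqm (R : fieldType) n f (p q : {poly R}) :
  rep n f p -> rep n f q -> eqm n p q.
Proof. by move=> h1 h2 i hi; rewrite -h1 ?h2. Qed.
Lemma rep_eqm2 (R : fieldType) n f (p q : {poly R}) :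
  rep n f p -> eqm n p q -> rep n f q.
Proof. by move=> h1 h2 i hi; rewrite h1 ?h2. Qed.

Lemma size_sinv_upto (R : fieldType) (f : nat -> R) m : size (sinv_upto f m) = m.+1.
Proof. by elim: m => [|m IH] //=; rewrite size_rcons IH. Qed.
Lemma nth_sinv_upto (R : fieldType) (f : nat -> R) m i :
  (i <= m)%N -> nth 0 (sinv_upto f m) i = sinv f i.
Proof.
elim: m => [|m IH] hi; first by move: hi; rewrite leqn0 => /eqP ->.
rewrite /= nth_rcons size_sinv_upto.
rewrite leq_eqVlt in hi; case/orP: hi => [/eqP ->|hi].
  by rewrite ltnn eqxx /sinv /= nth_rcons size_sinv_upto ltnn eqxx.
by rewrite hi IH.
Qed.
Lemma smul_sinv (R : fieldType) (f : nat -> R) : f 0%N != 0 ->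
  smul f (sinv f) =1 @sone R.
Proof.
move=> hf [|m]; rewrite /smul.
  by rewrite big_ord1 /sinv /= mulfV.
rewrite big_ord_recl /=.
have -> : sinv f m.+1 = - (f 0%N)^-1 * \sum_(i < m.+1) f i.+1 * sinv f (m - i)%N.
  rewrite /sinv /= nth_rcons size_sinv_upto ltnn eqxx; congr (_ * _).
  by apply: eq_bigr => i _; rewrite nth_sinv_upto // leq_subr.
rewrite mulrA mulrN mulfV // mulN1r.
under [X in _ + X]eq_bigr => i _ do rewrite /bump /= add1n subSS.
by rewrite addNr.
Qed.
Definition ff (R : comRingType) (c : R) j := \prod_(l < j) (c - l%:R).
Lemma ffS (R : comRingType) (c : R) j : ff c j.+1 = ff c j * (c - j%:R).
Proof. by rewrite /ff big_ord_recr. Qed.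
Lemma ff0 (R : comRingType) (c : R) : ff c 0 = 1.
Proof. by rewrite /ff big_ord0. Qed.

Lemma vdm (R : comRingType) (c d : R) i :
  \sum_(j < i.+1) ('C(i, j))%:R * (ff c j * ff d (i - j)) = ff (c + d) i.
Proof.
elim: i => [|i IH]; first by rewrite big_ord1 /= !ff0 !mulr1.
rewrite ffS -IH mulr_suml.
have E : forall j : 'I_i.+1, ('C(i, j))%:R * (ff c j * ff d (i - j)) * (c + d - i%:R)
   = ('C(i, j))%:R * (ff c j.+1 * ff d (i - j))
     + ('C(i, j))%:R * (ff c j * ff d (i - j).+1).
  move=> j; have hj : (j <= i)%N by rewrite -ltnS.
  by rewrite !ffS natrB //; ring.
rewrite (eq_bigr _ (fun j _ => E j)) big_split /=.
rewrite big_ord_recl /= ff0 subn0.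
under eq_bigr => j _ do rewrite /bump /= add1n binS natrD mulrDl subSS.
rewrite big_split /= [X in _ + X = _]addrC addrCA; congr (_ + _).
rewrite [in RHS]big_ord_recl /= ff0 subn0 bin0 mul1r; congr (_ + _); first by rewrite bin0.
rewrite big_ord_recr /= bin_small // mul0r addr0.
apply: eq_bigr => j _; rewrite /bump /= add1n subnSK //.
Qed.

Lemma gbinomE (R : fieldType) (c : R) j : gbinom c j = ff c j / (j`!)%:R.
Proof. by []. Qed.

Lemma sbin_mul (R : numFieldType) (a c d : R) i :
  \sum_(j < i.+1) sbinpow a c j * sbinpow a d (i - j) = sbinpow a (c + d) i.
Proof.
rewrite /sbinpow !gbinomE -vdm mulr_suml mulr_suml.
apply: eq_bigr => j _; have hj : (j <= i)%N by rewrite -ltnS.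
have hf : (i`!)%:R = ('C(i, j))%:R * ((j`!)%:R * ((i - j)`!)%:R) :> R.
  by rewrite -!natrM bin_fact.
have ha : a ^+ i = a ^+ j * a ^+ (i - j) by rewrite -exprD subnKC.
rewrite hf ha.
have h1 : (j`!)%:R != 0 :> R by rewrite pnatr_eq0 -lt0n fact_gt0.
have h2 : ((i - j)`!)%:R != 0 :> R by rewrite pnatr_eq0 -lt0n fact_gt0.
have h3 : ('C(i, j))%:R != 0 :> R by rewrite pnatr_eq0 -lt0n bin_gt0.
rewrite !gbinomE; by field; rewrite h1 h2 h3.
Qed.

Lemma sbin0 (R : numFieldType) (a : R) : sbinpow a 0 =1 @sone R.
Proof.
case=> [|i]; rewrite /sbinpow /gbinom /=; first by rewrite big_ord0 expr0 divr1 mulr1.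
by rewrite big_ord_recl subrr mul0r !mul0r.
Qed.

Lemma ffnat (R : numFieldType) (j k : nat) :
  ff (j%:R : R) k = ('C(j, k) * k`!)%:R.
Proof.
elim: k => [|k IH]; first by rewrite ff0 bin0.
rewrite ffS IH !bin_ffact ffactnSr.
case: (leqP k j) => hk; first by rewrite natrM natrB.
by rewrite ffact_small // !mul0n mul0r.
Qed.

Lemma horner_gfact (R : numFieldType) (a x : R) m : a != 0 ->
  (gfact a m).[x] = (m`!)%:R * sbinpow a (x / a) m.
Proof.
move=> ha; rewrite /gfact horner_prod /sbinpow /gbinom.
under eq_bigr => j _ do rewrite hornerXsubC.
have h1 : (m`!)%:R != 0 :> R by rewrite pnatr_eq0 -lt0n fact_gt0.
have -> : a ^+ m = \prod_(j < m) a by rewrite prodr_const card_ord.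
have E : forall u v w : R, w != 0 -> w * (u / w * v) = u * v by move=> u v w hw; field.
rewrite E // -big_split /=.
by apply: eq_bigr => j _; field.
Qed.

Lemma horner_gfact_shift (R : numFieldType) (b c : R) (k j : nat) :
  (gfact_shift c b k).[c + j%:R * b] = b ^+ k * ('C(j, k) * k`!)%:R.
Proof.
rewrite /gfact_shift horner_prod -ffnat /ff.
under eq_bigr => l _ do rewrite hornerXsubC.
have -> : b ^+ k = \prod_(j < k) b by rewrite prodr_const card_ord.
rewrite -big_split /=.
by apply: eq_bigr => l _; ring.
Qed.

Lemma eqm_eq (R : fieldType) n (p q : {poly R}) : p = q -> eqm n p q.
Proof. by move=> ->. Qed.

Definition Bp (R : fieldType) n (a c : R) : {poly R} := Tp n (sbinpow a c).

Lemma coef_Bp (R : fieldType) n (a c : R) i : (i <= n)%N -> (Bp n a c)`_i = sbinpow a c i.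
Proof. by move=> hi; rewrite coef_poly ltnS hi. Qed.

Lemma Bp_mul (R : numFieldType) n (a c d : R) :
  eqm n (Bp n a c * Bp n a d) (Bp n a (c + d)).
Proof.
move=> i hi; rewrite -(rep_smul (@rep_Tp _ n (sbinpow a c)) (@rep_Tp _ n (sbinpow a d)) hi).
by rewrite /smul sbin_mul coef_Bp.
Qed.

Lemma Bp0 (R : numFieldType) n (a : R) : eqm n (Bp n a 0) 1.
Proof. by move=> i hi; rewrite coef_Bp // sbin0; apply: (@rep_sone _ n). Qed.

Lemma Bp_exp (R : numFieldType) n (a c : R) j :
  eqm n (Bp n a c ^+ j) (Bp n a (j%:R * c)).
Proof.
elim: j => [|j IH]; first by rewrite expr0 mul0r; apply/eqm_sym/Bp0.
rewrite exprS; apply: (eqm_trans (q := Bp n a c * Bp n a (j%:R * c))).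
  by apply: eqmM.
by rewrite -addn1 natrD mulrDl mul1r addrC; apply: Bp_mul.
Qed.

Lemma sum_widen (R : numFieldType) (N m : nat) (F : nat -> R) : (m <= N)%N ->
  \sum_(k < N.+1) (if (k <= m)%N then F k else 0) = \sum_(k < m.+1) F k.
Proof.
move=> hm; rewrite -(big_mkord xpredT (fun k => if (k <= m)%N then F k else 0)).
rewrite -(big_mkord xpredT F).
rewrite [LHS](@big_cat_nat _ _ _ m.+1) //=.
rewrite [X in _ + X]big_nat_cond [X in _ + X]big1 ?addr0; last first.
  by move=> k /andP [/andP [h1 _] _]; rewrite leqNgt h1.
by rewrite big_nat_cond [RHS]big_nat_cond; apply: eq_bigr => k /andP [/andP [_ h] _]; rewrite -ltnS h.
Qed.

Lemma stir_binom (R : numFieldType) n (a b g : R) S : a != 0 -> is_genStirling a b g S ->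
  forall j m, (j <= n)%N -> (m <= n)%N ->
  \sum_(k < n.+1) ('C(j, k))%:R * (((Bp n a (b / a) - 1) ^+ k) * Bp n a (g / a))`_m
  = \sum_(k < n.+1) ('C(j, k))%:R *
       ((if (k <= m)%N then S m k else 0) * ((k`!)%:R * b ^+ k) / (m`!)%:R).
Proof.
move=> ha hS j m hj hm.
set w := Bp n a (b / a) - 1.
have E1 : forall k : 'I_n.+1, ('C(j, k))%:R * ((w ^+ k) * Bp n a (g / a))`_m
    = if (k <= j)%N then ('C(j, k))%:R * ((w ^+ k) * Bp n a (g / a))`_m else 0.
  by move=> k; case: leqP => // hk; rewrite bin_small // mul0r.
rewrite (eq_bigr _ (fun k _ => E1 k)).
rewrite (sum_widen (fun k => ('C(j, k))%:R * ((w ^+ k) * Bp n a (g / a))`_m) hj).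
have E2 : forall k : 'I_n.+1, ('C(j, k))%:R *
       ((if (k <= m)%N then S m k else 0) * ((k`!)%:R * b ^+ k) / (m`!)%:R)
   = if (k <= m)%N then ('C(j, k))%:R * (S m k * ((k`!)%:R * b ^+ k) / (m`!)%:R) else 0.
  by move=> k; case: leqP => // hk; rewrite !mul0r mulr0.
rewrite (eq_bigr _ (fun k _ => E2 k)).
rewrite (sum_widen (fun k => ('C(j, k))%:R * (S m k * ((k`!)%:R * b ^+ k) / (m`!)%:R)) hm).
under eq_bigr => k _ do rewrite mulr_natl -coefMn -mulrnAl.
rewrite -coef_sum -mulr_suml -exprD1n /w subrK.
have Hc : ((Bp n a (b / a)) ^+ j * Bp n a (g / a))`_m = (Bp n a ((g + j%:R * b) / a))`_m.
  have -> : (g + j%:R * b) / a = j%:R * (b / a) + g / a by field.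
  suff H : eqm n ((Bp n a (b / a)) ^+ j * Bp n a (g / a)) (Bp n a (j%:R * (b / a) + g / a)) by apply: H.
  apply: (eqm_trans (q := Bp n a (j%:R * (b / a)) * Bp n a (g / a))).
    by apply: eqmM; [apply: Bp_exp | move=> ? ?].
  by apply: Bp_mul.
rewrite Hc coef_Bp //.
have hf : (m`!)%:R != 0 :> R by rewrite pnatr_eq0 -lt0n fact_gt0.
have -> : sbinpow a ((g + j%:R * b) / a) m = (gfact a m).[g + j%:R * b] / (m`!)%:R.
  by rewrite horner_gfact // mulrAC divff // mul1r.
rewrite hS horner_sum mulr_suml; apply: eq_bigr => k _.
rewrite hornerZ horner_gfact_shift natrM; field; exact: hf.
Qed.

Lemma stir_gf (R : numFieldType) n (a b g : R) S : a != 0 -> is_genStirling a b g S ->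
  forall k m, (k <= n)%N -> (m <= n)%N ->
  (((Bp n a (b / a) - 1) ^+ k) * Bp n a (g / a))`_m
   = (if (k <= m)%N then S m k else 0) * ((k`!)%:R * b ^+ k) / (m`!)%:R.
Proof.
move=> ha hS k m hk hm; move: hk; elim/ltn_ind: k => k IH hk.
have := stir_binom ha hS hk hm.
move/eqP; rewrite -subr_eq0 -sumrB (bigD1 (Ordinal (hk : (k < n.+1)%N))) //=.
rewrite big1 ?addr0; last first.
  move=> i hi; case: (ltngtP i k) => hik.
  - by rewrite IH ?subrr // (leq_trans (ltnW hik) hk).
  - by rewrite bin_small // !mul0r subrr.
  - by move: hi; rewrite -val_eqE /= hik eqxx.
by rewrite binn mul1r mul1r subr_eq0 => /eqP.
Qed.

Definition Hs (R : fieldType) n (y : {poly R}) lam : {poly R} :=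
  \sum_(k < n.+1) (rbinom R lam k)%:P * (- y) ^+ k.

Lemma rb_0 (R : numFieldType) lam : rbinom R lam 0 = 1.
Proof. by rewrite /rbinom big_ord0 divr1. Qed.
Lemma rb0S (R : numFieldType) k : rbinom R 0 k.+1 = 0.
Proof. by rewrite /rbinom big_ord_recl /= mul0r mul0r. Qed.
Lemma rb_rec (R : numFieldType) lam k :
  rbinom R lam.+1 k.+1 = rbinom R lam.+1 k + rbinom R lam k.+1.
Proof.
rewrite /rbinom big_ord_recr big_ord_recl /=.
have -> : \prod_(i < k) ((lam + bump 0 i)%N%:R : R) = \prod_(i < k) ((lam.+1 + i)%N%:R).
  by apply: eq_bigr => i _; rewrite /bump /= add1n addnS addSn.
set P := \prod_(i < k) _.
have h1 : (k`!)%:R != 0 :> R by rewrite pnatr_eq0 -lt0n fact_gt0.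
have h2 : (k.+1)%:R != 0 :> R by rewrite pnatr_eq0.
rewrite factS natrM !natrD /=.
have e1 : (k.+1)%:R = k%:R + 1 :> R by rewrite -addn1 natrD.
have e2 : (lam.+1)%:R = lam%:R + 1 :> R by rewrite -addn1 natrD.
rewrite e1 e2 addr0; rewrite e1 in h2.
by field; rewrite h1 h2.
Qed.

Lemma pow_low (R : fieldType) (p : {poly R}) : p`_0 = 0 ->
  forall k i, (i < k)%N -> (p ^+ k)`_i = 0.
Proof.
move=> h0; elim=> [//|k IH] i hi; rewrite exprS coefM big1 // => j _.
case: (posnP j) => [->|hj]; first by rewrite h0 mul0r.
by rewrite IH ?mulr0 //; have := ltn_ord j; lia.
Qed.

Lemma geom_aux (R : numFieldType) (z : {poly R}) lam N :
  (1 - z) * \sum_(k < N.+1) (rbinom R lam.+1 k)%:P * z ^+ k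
  = \sum_(k < N.+1) (rbinom R lam k)%:P * z ^+ k - (rbinom R lam.+1 N)%:P * z ^+ N.+1.
Proof.
elim: N => [|N IH].
  by rewrite !big_ord1 !rb_0 expr1 expr0; ring.
rewrite big_ord_recr /= mulrDr IH [in RHS]big_ord_recr /= rb_rec polyCD !exprS; ring.
Qed.

Lemma H_rec (R : numFieldType) n (y : {poly R}) lam : y`_0 = 0 ->
  eqm n ((1 + y) * Hs n y lam.+1) (Hs n y lam).
Proof.
move=> hy i hi; rewrite /Hs.
have -> : 1 + y = 1 - (- y) by rewrite opprK.
rewrite geom_aux coefB coefCM pow_low ?mulr0 ?subr0 //.
by rewrite coefN hy oppr0.
Qed.

Lemma Hs0 (R : numFieldType) n (y : {poly R}) : Hs n y 0 = 1.
Proof.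
rewrite /Hs big_ord_recl rb_0 expr0 mulr1 big1 ?addr0 // => i _.
by rewrite rb0S mul0r.
Qed.

Lemma inv_pow (R : numFieldType) n (y q : {poly R}) : y`_0 = 0 ->
  eqm n ((1 + y) * q) 1 -> forall lam, eqm n (q ^+ lam) (Hs n y lam).
Proof.
move=> hy hq; elim=> [|lam IH]; first by rewrite Hs0 expr0.
rewrite exprSr.
apply: (eqm_trans (q := Hs n y lam * q)); first by apply: eqmM => // ? ?.
apply: (eqm_trans (q := (1 + y) * Hs n y lam.+1 * q)).
  by apply: eqmM; [apply/eqm_sym/H_rec | move=> ? ?].
rewrite mulrAC; apply: (eqm_trans (q := 1 * Hs n y lam.+1)); last by rewrite mul1r.
by apply: eqmM => // ? ?.
Qed.

Lemma sbinpow0 (R : fieldType) (a c : R) : sbinpow a c 0 = 1.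
Proof. by rewrite /sbinpow /gbinom big_ord0 divr1 mulr1. Qed.

Lemma ML (R : numFieldType) n (a b g : R) lam S (q : {poly R}) :
  a != 0 -> is_genStirling a b g S ->
  eqm n ((Bp n a (b / a) + 1) * q) 1 ->
  (n`!)%:R * (((2%:P * q) ^+ lam) * Bp n a (g / a))`_n
   = \sum_(k < n.+1) S n k * rbinom R lam k * (k`!)%:R * ((- b) ^+ k / 2 ^+ k).
Proof.
move=> ha hS hq.
set w := Bp n a (b / a) - 1.
set y := (2^-1 : R)%:P * w.
have h2 : (2 : R) != 0 by rewrite pnatr_eq0.
have hy : y`_0 = 0.
  by rewrite /y /w coefCM coefB coef_Bp // sbinpow0 coef1 subrr mulr0.
have e : (2 : R)%:P * (2^-1)%:P = 1 by rewrite -polyCM mulfV.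
have h1 : eqm n ((1 + y) * (2%:P * q)) 1.
  have -> : (1 + y) * (2%:P * q) = (2%:P + (2%:P * (2^-1)%:P) * w) * q by rewrite /y; ring.
  rewrite e mul1r /w polyC_natr.
  have -> : (2%:R + (Bp n a (b / a) - 1)) = Bp n a (b / a) + 1 :> {poly R}.
    by rewrite -[2%:R]/((1 + 1) : {poly R}); ring.
  exact: hq.
have H := inv_pow hy h1 lam.
have -> : (((2%:P * q) ^+ lam) * Bp n a (g / a))`_n = (Hs n y lam * Bp n a (g / a))`_n.
  have := eqmM H (@eqm_refl _ n (Bp n a (g / a))); move=> /(_ n (leqnn n)) E; exact E.
rewrite /Hs mulr_suml coef_sum mulr_sumr; apply: eq_bigr => k _.
have hk : (k <= n)%N by rewrite -ltnS.
have -> : (- y) ^+ k = ((- 2^-1) ^+ k)%:P * w ^+ k.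
  by rewrite /y -mulNr -polyCN exprMn polyC_exp.
rewrite -!mulrA coefCM coefCM (stir_gf ha hS hk (leqnn n)) hk.
have hf : (n`!)%:R != 0 :> R by rewrite pnatr_eq0 -lt0n fact_gt0.
have -> : (- b) ^+ k / 2 ^+ k = (- 2^-1) ^+ k * b ^+ k.
  by rewrite -exprVn -!exprMn; congr (_ ^+ _); field.
have hkf : (k`!)%:R != 0 :> R by rewrite pnatr_eq0 -lt0n fact_gt0.
rewrite /rbinom; field; by rewrite hf hkf.
Qed.

Lemma inv_Tp (R : numFieldType) n (f : nat -> R) (p : {poly R}) :
  f 0%N != 0 -> rep n f p -> eqm n (p * Tp n (sinv f)) 1.
Proof.
move=> hf hp i hi; rewrite -(rep_smul hp (@rep_Tp _ n (sinv f)) hi) smul_sinv //.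
exact: (@rep_sone _ n).
Qed.

Lemma inv_B (R : numFieldType) n (a c : R) :
  eqm n ((Bp n a c + 1) * Tp n (sinv (sadd (sbinpow a c) (@sone R)))) 1.
Proof.
apply: inv_Tp; first by rewrite /sadd sbinpow0 /sone (_ : 1 + 1 = 2%:R) // pnatr_eq0.
exact: rep_sadd (@rep_Tp _ n _) (@rep_sone _ n).
Qed.

Lemma genEuler_poly (R : numFieldType) lam (a b g : R) n :
  genEuler lam a b g n =
  (n`!)%:R * (((2%:P * Tp n (sinv (sadd (sbinpow a (b / a)) (@sone R)))) ^+ lam)
               * Bp n a (g / a))`_n.
Proof.
rewrite /genEuler; congr (_ * _).
apply: (rep_smul (rep_spow _ (rep_sscale _ (@rep_Tp _ n _))) (@rep_Tp _ n _)).
exact: leqnn.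
Qed.

Theorem mainTheorem11 (R : realFieldType) (alpha beta gamma : R) (lam : nat)
  (S1 S2 : nat -> nat -> R) :
  alpha != 0 ->
  is_genStirling alpha beta gamma S1 ->
  is_genStirling alpha (- beta) (gamma - beta * lam%:R) S2 ->
  forall n : nat,
    genEuler lam alpha beta gamma n =
      \sum_(k < n.+1) S1 n k * rbinom R lam k * (k`!)%:R
                       * ((- beta) ^+ k / 2 ^+ k)
    /\
    genEuler lam alpha beta gamma n =
      \sum_(k < n.+1) S2 n k * rbinom R lam k * (k`!)%:R
                       * (beta ^+ k / 2 ^+ k).
Proof.
move=> ha hS1 hS2 n.
rewrite genEuler_poly.
set q := Tp n _.
have hq : eqm n ((Bp n alpha (beta / alpha) + 1) * q) 1 by apply: inv_B.
split; first exact: (@ML _ n _ _ _ lam _ _ ha hS1 hq).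
set q' := Tp n (sinv (sadd (sbinpow alpha ((- beta) / alpha)) (@sone R))).
have hq' : eqm n ((Bp n alpha ((- beta) / alpha) + 1) * q') 1 by apply: inv_B.
have := @ML _ n _ _ _ lam _ _ ha hS2 hq'; rewrite opprK => <-; congr (_ * _).
set u := Bp n alpha (beta / alpha).
set u' := Bp n alpha ((- beta) / alpha).
have huu : eqm n (u * u') 1.
  apply: (eqm_trans (q := Bp n alpha (beta / alpha + (- beta) / alpha))); first exact: Bp_mul.
  by rewrite mulNr addrN; apply: Bp0.
have Hq : eqm n q (u' * q').
  apply: (eqm_trans (q := q * ((u' + 1) * q'))).
    by rewrite -{1}[q]mulr1; apply: eqmM; [move=> ? ? | apply: eqm_sym].
  apply: (eqm_trans (q := q * ((u' + u * u') * q'))).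
    apply: eqmM; first by move=> ? ?.
    apply: eqmM; last by move=> ? ?.
    by apply: eqmD; [move=> ? ? | apply: eqm_sym].
  have -> : q * ((u' + u * u') * q') = ((u + 1) * q) * (u' * q') by ring.
  apply: (eqm_trans (q := 1 * (u' * q'))); last by rewrite mul1r.
  by apply: eqmM => // ? ?.
suff H : eqm n ((2%:P * q) ^+ lam * Bp n alpha (gamma / alpha))
   ((2%:P * q') ^+ lam * Bp n alpha ((gamma - beta * lam%:R) / alpha)).
  exact: H.
apply: (eqm_trans (q := (2%:P * (u' * q')) ^+ lam * Bp n alpha (gamma / alpha))).
  by apply: eqmM; [apply: eqmX; apply: eqmM; [move=> ? ? | ] | move=> ? ?].
have -> : (2%:P * (u' * q')) ^+ lam * Bp n alpha (gamma / alpha)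
   = (2%:P * q') ^+ lam * (u' ^+ lam * Bp n alpha (gamma / alpha)).
  by rewrite mulrCA exprMn -mulrA mulrCA.
apply: eqmM; first by move=> ? ?.
apply: (eqm_trans (q := Bp n alpha (lam%:R * ((- beta) / alpha)) * Bp n alpha (gamma / alpha))).
  by apply: eqmM; [apply: Bp_exp | move=> ? ?].
have -> : (gamma - beta * lam%:R) / alpha = lam%:R * ((- beta) / alpha) + gamma / alpha.
  by field.
exact: Bp_mul.
Qed.
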